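(* Let $A$ be a ring, $a\in A$, and $B$ a ring extension of $A$ (so $A\subseteq B$) such that $B_a=B[1/a]$ is integral over $A_a=A[1/a]$. Then $a\cdot\big((\mathrm{Jac}_B 0)\cap A\big)\subseteq \mathrm{Jac}_A 0$.
   Context: All rings are commutative with identity. The setting is constructive mathematics: no law of excluded middle and no Zorn's lemma. For a ring $A$ and a subset $U\subseteq A$, $\langle U\rangle_A$ denotes the ideal generated by $U$. Define $\mathrm{Jac}_A U:=\{a\in A:\forall b\in A,\ 1\in\langle U\cup\{1-ab\}\rangle_A\}$. Thus $\mathrm{Jac}_A 0=\{a\in A: \forall b\in A,\ 1-ab \text{ is invertible}\}$. *)

(* Defs.v *)
From mathcomp Require Import all_boot all_algebra.
Set Implicit Arguments. Unset Strict Implicit. Unset Printing Implicit Defensive.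
Import GRing.Theory.
Local Open Scope ring_scope.

Definition invertible (R : comPzRingType) (u : R) : Prop := exists v : R, u * v = 1.

Definition Jac0 (R : comPzRingType) (x : R) : Prop :=
  forall y : R, invertible (1 - x * y).

(* "B[1/a] is integral over A[1/a]", where f : A -> B is the structure map
   and a : A is inverted (via f a in B).  Elements of B[1/a] are fractions
   b / (f a)^k; coefficients in A[1/a] are written over a common denominator
   a^e.  The element b/(f a)^k is integral over A[1/a] iff there is a monic
   relation
      (b/a^k)^n + sum_{i<n} (c_i/a^e) (b/a^k)^i = 0   in B[1/a],
   i.e. (multiplying by the unit a^(e+k n)) iff for some N
      a^N * ( a^e b^n + sum_{i<n} c_i b^i a^(k (n-i)) ) = 0   in B. *)
Definition loc_integral (A B : comPzRingType) (f : A -> B) (a : A) : Prop :=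
  forall (b : B) (k : nat),
    exists (n : nat) (c : 'I_n -> A) (e N : nat),
      f a ^+ N *
        (f a ^+ e * b ^+ n
         + \sum_(i < n) f (c i) * b ^+ i * f a ^+ (k * (n - i))) = 0.

(* Main.v *)
Require Import Defs.
From mathcomp Require Import all_boot all_algebra.
From mathcomp Require Import ring.
Import GRing.Theory.
Local Open Scope ring_scope.

Lemma pow_one_sub (R : comPzRingType) (u : R) (M : nat) :
  exists s, (1 - u) ^+ M = 1 - u * s.
Proof.
elim: M => [|M [s Hs]]; first by exists 0; rewrite expr0 mulr0 subr0.
exists (s + 1 - u * s); rewrite exprS Hs.
by ring.
Qed.

Theorem mainTheorem8 (A B : comPzRingType) (f : {rmorphism A -> B})
  (f_inj : injective f) (a : A)
  (hint : loc_integral f a) :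
  forall x : A, Jac0 (f x) -> Jac0 (a * x).
Proof.
move=> x H y.
set u := 1 - a * x * y.
have [v Hv] : invertible (f u).
  suff -> : f u = 1 - f x * f (a * y) by apply: H.
  rewrite /u rmorphB rmorph1 !rmorphM /=; ring.
have [n [c [e [N Hr]]]] := hint v 0.
have key : a ^+ N * (a ^+ e + u * \sum_(i < n) c i * u ^+ (n - i.+1)) = 0.
  apply: f_inj; rewrite rmorph0.
  have := congr1 (fun t => f u ^+ n * t) Hr; rewrite mulr0 => <-.
  rewrite rmorphM rmorphD rmorphXn /= mulrCA; congr (_ * _).
  rewrite mulrDr; congr (_ + _).
    by rewrite rmorphXn mulrCA -exprMn Hv expr1n mulr1.
  rewrite rmorphM rmorph_sum !mulr_sumr /=; apply: eq_bigr => i _.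
  rewrite !rmorphM rmorphXn mul0n expr0 mulr1 /=.
  have Hi : (n = (n - i.+1).+1 + i)%N.
    by rewrite subnSK // subnK // ltnW.
  have E : f u ^+ i * v ^+ i = 1 by rewrite -exprMn Hv expr1n.
  have -> : f u ^+ n = f u ^+ ((n - i.+1).+1 + i) by rewrite -Hi.
  rewrite exprD exprS.
  transitivity (f u * (f (c i) * f u ^+ (n - i.+1)) * (f u ^+ i * v ^+ i));
    [by rewrite E mulr1 | ring].
set s := \sum_(i < n) _ in key.
have Hdiv : a ^+ (N + e) = u * (- (a ^+ N * s)).
  apply/eqP; rewrite -subr_eq0 mulrN opprK exprD; apply/eqP.
  by rewrite -key mulrDr mulrCA.
have [t Ht] := @pow_one_sub A (1 - a * x * y) (N + e).
have Hau : 1 - (1 - a * x * y) = a * (x * y) by ring.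
rewrite Hau exprMn Hdiv in Ht.
exists (t + (x * y) ^+ (N + e) * - (a ^+ N * s)).
rewrite /u.
transitivity (1 - (1 - u * t) + (x * y) ^+ (N + e) * (u * - (a ^+ N * s))).
  rewrite /u; ring.
rewrite -Ht /u; ring.
Qed.
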